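(* Let $\mathcal{M}=(S,A,\delta)$ be a finite fuzzy transition system and $\gamma\in(0,1)$. For any functions $d,d':S\times S\to[0,1]$, \[\|\Delta(d)-\Delta(d')\|\le\gamma\cdot\|d-d'\|,\] where $\|e\|=\max_{s,t\in S}|e(s,t)|$.
   Context: A fuzzy set on a finite set $X$ is a map $\mu:X\to[0,1]$; $\mathcal{F}(X)$ is the set of fuzzy sets on $X$; $\mu(U)=\max_{x\in U}\mu(x)$. A fuzzy transition system is $\mathcal{M}=(S,A,\delta)$ with $S,A$ finite and $\delta:S\times A\to\mathcal{P}(\mathcal{F}(S))$, each $\delta(s,a)$ finite. For $d:S\times S\to[0,1]$, the lifting is: $\hat d(\mu,\eta)=1$ if $\mu(S)\ne\eta(S)$, and otherwise $\hat d(\mu,\eta)$ is the minimum of $\max_{u,v}\min(d(u,v),x_{uv})$ over $x_{uv}\ge0$ with $\max_v x_{uv}=\mu(u)$ for all $u$ and $\max_u x_{uv}=\eta(v)$ for all $v$. For finite $Z\subseteq\mathcal{F}(S)$: $\hat d(\mu,Z)=\min_{\eta\in Z}\hat d(\mu,\eta)$ if $Z\ne\emptyset$, else $1$. Hausdorff distance: $H_{\hat d}(\emptyset,\emptyset)=0$, otherwise $H_{\hat d}(Y,Z)=\max(\max_{\mu\in Y}\hat d(\mu,Z),\max_{\eta\in Z}\hat d(\eta,Y))$. With discounting factor $\gamma$, $\Delta(d)(s,t)=\gamma\cdot\max_{a\in A}H_{\hat d}(\delta(s,a),\delta(t,a))$. *)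

(* Defs.v *)
From HB Require Import structures.
From mathcomp Require Import all_boot all_order all_algebra.
From mathcomp Require Import boolp classical_sets reals.
Set Implicit Arguments. Unset Strict Implicit. Unset Printing Implicit Defensive.
Import Order.TTheory GRing.Theory Num.Theory.
Local Open Scope ring_scope.
Local Open Scope classical_set_scope.

Section FuzzyDefs.
Variables (R : realType) (S A : finType).

(* fuzzy sets on S: maps S -> [0,1] (the [0,1] constraint is a hypothesis
   where needed). mu(S) = max_{x in S} mu x. *)
Definition fheight (mu : {ffun S -> R}) : R := \big[Num.max/0]_(x : S) mu x.

Definition coupling_values (d : S -> S -> R) (mu eta : {ffun S -> R}) : set R :=
  [set r | exists x : S -> S -> R,
      (forall u v, 0 <= x u v) /\
      (forall u, \big[Num.max/0]_(v : S) x u v = mu u) /\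
      (forall v, \big[Num.max/0]_(u : S) x u v = eta v) /\
      r = \big[Num.max/0]_(u : S) \big[Num.max/0]_(v : S) Num.min (d u v) (x u v)].

Definition lift (d : S -> S -> R) (mu eta : {ffun S -> R}) : R :=
  if fheight mu != fheight eta then 1 else inf (coupling_values d mu eta).

Definition lift_set (d : S -> S -> R) (mu : {ffun S -> R})
    (Z : seq {ffun S -> R}) : R :=
  match Z with
  | [::] => 1
  | eta :: Z' => \big[Num.min/lift d mu eta]_(e <- Z') lift d mu e
  end.

Definition hausdorff (d : S -> S -> R) (Y Z : seq {ffun S -> R}) : R :=
  if (Y == [::]) && (Z == [::]) then 0
  else Num.max (\big[Num.max/0]_(mu <- Y) lift_set d mu Z)
               (\big[Num.max/0]_(eta <- Z) lift_set d eta Y).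

Definition Delta (delta : S -> A -> seq {ffun S -> R}) (gamma : R)
    (d : S -> S -> R) : S -> S -> R :=
  fun s t => gamma * \big[Num.max/0]_(a : A) hausdorff d (delta s a) (delta t a).

Definition supnorm (e : S -> S -> R) : R :=
  \big[Num.max/0]_(s : S) \big[Num.max/0]_(t : S) `|e s t|.

End FuzzyDefs.

(* Main.v *)
Require Import Defs.
From HB Require Import structures.
From mathcomp Require Import all_boot all_order all_algebra.
From mathcomp Require Import boolp classical_sets reals.
From mathcomp Require Import lra.
Import Order.TTheory GRing.Theory Num.Theory.
Local Open Scope ring_scope.

Section Aux.
Variable R : realType.

Lemma max_lip (e a b c d : R) : `|a - b| <= e -> `|c - d| <= e ->
  `|Num.max a c - Num.max b d| <= e.
Proof.
rewrite !ler_norml => /andP[h1 h2] /andP[h3 h4].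
have [h|h] := leP a c; have [k|k] := leP b d;
  apply/andP; split; lra.
Qed.

Lemma min_lip (e a b c d : R) : `|a - b| <= e -> `|c - d| <= e ->
  `|Num.min a c - Num.min b d| <= e.
Proof.
rewrite !ler_norml => /andP[h1 h2] /andP[h3 h4].
have [h|h] := leP a c; have [k|k] := leP b d;
  apply/andP; split; lra.
Qed.

Lemma bigmax_lip (I : Type) (r : seq I) (x y : R) (F G : I -> R) (e : R) :
  `|x - y| <= e -> (forall i, `|F i - G i| <= e) ->
  `|\big[Num.max/x]_(i <- r) F i - \big[Num.max/y]_(i <- r) G i| <= e.
Proof.
move=> hxy hFG.
apply: (big_ind2 (fun a b => `|a - b| <= e)) => //.
by move=> ? ? ? ? ? ?; apply: max_lip.
Qed.

Lemma bigmin_lip (I : Type) (r : seq I) (x y : R) (F G : I -> R) (e : R) :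
  `|x - y| <= e -> (forall i, `|F i - G i| <= e) ->
  `|\big[Num.min/x]_(i <- r) F i - \big[Num.min/y]_(i <- r) G i| <= e.
Proof.
move=> hxy hFG.
apply: (big_ind2 (fun a b => `|a - b| <= e)) => //.
by move=> ? ? ? ? ? ?; apply: min_lip.
Qed.

Lemma inf_lip (T : Type) (P1 P2 P3 : T -> Prop) (f g : T -> R) (e : R) :
  0 <= e ->
  (forall x, 0 <= f x) -> (forall x, 0 <= g x) ->
  (forall x, `|f x - g x| <= e) ->
  `|inf [set r | exists x, P1 x /\ P2 x /\ P3 x /\ r = f x] -
    inf [set r | exists x, P1 x /\ P2 x /\ P3 x /\ r = g x]| <= e.
Proof.
move=> e0 f0 g0 hfg.
set E := (X in `|inf X - _|); set E' := (X in `|_ - inf X|).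
have [[x [p1 [p2 [p3 _]]]]|ne] := pselect (exists x, P1 x /\ P2 x /\ P3 x /\ True).
- have hE : has_lbound E by exists 0 => r [y [_ [_ [_ ->]]]].
  have hE' : has_lbound E' by exists 0 => r [y [_ [_ [_ ->]]]].
  have nE : nonempty E by exists (f x); exists x.
  have nE' : nonempty E' by exists (g x); exists x.
  have a1 : inf E - e <= inf E'.
    apply: lb_le_inf => // r [y [q1 [q2 [q3 ->]]]].
    have : inf E <= f y by apply: ge_inf => //; exists y.
    move: (hfg y); rewrite ler_norml => /andP[? ?]; lra.
  have a2 : inf E' - e <= inf E.
    apply: lb_le_inf => // r [y [q1 [q2 [q3 ->]]]].
    have : inf E' <= g y by apply: ge_inf => //; exists y.
    move: (hfg y); rewrite ler_norml => /andP[? ?]; lra.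
  rewrite ler_norml; apply/andP; split; lra.
- have -> : E = set0.
    apply/seteqP; split => r // [y [q1 [q2 [q3 _]]]]; exfalso; apply: ne; by exists y.
  have -> : E' = set0.
    apply/seteqP; split => r // [y [q1 [q2 [q3 _]]]]; exfalso; apply: ne; by exists y.
  by rewrite subrr normr0.
Qed.

Lemma bigmax_ge0 (I : Type) (r : seq I) (F : I -> R) :
  0 <= \big[Num.max/0]_(i <- r) F i.
Proof.
elim: r => [|i r IH]; first by rewrite big_nil.
by rewrite big_cons le_max IH orbT.
Qed.

End Aux.

Theorem lemma6 (R : realType) (S A : finType)
    (delta : S -> A -> seq {ffun S -> R})
    (Hdelta : forall s a mu, mu \in delta s a -> forall x, 0 <= mu x <= 1)
    (gamma : R) (Hgamma : 0 < gamma < 1)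
    (d d' : S -> S -> R)
    (Hd : forall s t, 0 <= d s t <= 1) (Hd' : forall s t, 0 <= d' s t <= 1) :
  supnorm (fun s t => Delta delta gamma d s t - Delta delta gamma d' s t)
    <= gamma * supnorm (fun s t => d s t - d' s t).
Proof.
set e := supnorm (fun s t => d s t - d' s t).
have he : forall u v, `|d u v - d' u v| <= e.
  move=> u v; rewrite /e /supnorm.
  apply: le_trans (le_bigmax _ _ u).
  exact: (le_bigmax _ (fun t => `|d u t - d' u t|) v).
have e0 : 0 <= e by apply: bigmax_ge0.
have z0 : `|(0:R) - 0| <= e by rewrite subrr normr0.
have hl : forall mu eta, `|Defs.lift d mu eta - Defs.lift d' mu eta| <= e.
  move=> mu eta; rewrite /Defs.lift; case: ifP => _; first by rewrite subrr normr0.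
  rewrite /coupling_values; apply: inf_lip => //.
  - by move=> x; apply: bigmax_ge0.
  - by move=> x; apply: bigmax_ge0.
  move=> x; apply: bigmax_lip => // u; apply: bigmax_lip => // v.
  by apply: min_lip => //; rewrite subrr normr0.
have hls : forall mu Z, `|lift_set d mu Z - lift_set d' mu Z| <= e.
  move=> mu [|eta Z] /=; first by rewrite subrr normr0.
  by apply: bigmin_lip.
have hh : forall Y Z, `|hausdorff d Y Z - hausdorff d' Y Z| <= e.
  move=> Y Z; rewrite /hausdorff; case: ifP => _; first by rewrite subrr normr0.
  by apply: max_lip; apply: bigmax_lip.
have g0 : 0 <= gamma by case/andP: Hgamma => /ltW.
rewrite /supnorm.
elim/big_ind: _ => //; first by apply: mulr_ge0.
  by move=> a b ha hb; rewrite ge_max ha hb.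
move=> s _; elim/big_ind: _ => //; first by apply: mulr_ge0.
  by move=> a b ha hb; rewrite ge_max ha hb.
move=> t _; rewrite /Delta -mulrBr normrM ger0_norm //.
by apply: ler_wpM2l => //; apply: bigmax_lip.
Qed.
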